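(* For $a\in[1,2]$ and $b>1$ define $g(a,b)=x\,x_1+y\,y_1$, where $$x=\frac{\sqrt{a^2-1}\,(a^3-8)}{a^6},\quad x_1=(\sqrt{a^2-1}-\sqrt{b^2-1})^3+a^3,\quad y=\frac{\sqrt{b^2-1}\,(b^3-8)}{b^6},\quad y_1=(\sqrt{a^2-1}-\sqrt{b^2-1})^3+b^3.$$ Then for every $a\in(1,2)$ there exists a unique $b=\hat b(a)\in(\sqrt2,5/2)$ such that $g(a,b)<0$ for $\sqrt2<b<\hat b(a)$, $g(a,\hat b(a))=0$, and $g(a,b)>0$ for $\hat b(a)<b<5/2$. *)

(* Defs.v *)
From Stdlib Require Import Reals Lra.
Open Scope R_scope.

Definition g (a b : R) : R :=
  let sa := sqrt (a ^ 2 - 1) in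
  let sb := sqrt (b ^ 2 - 1) in
  let x := sa * (a ^ 3 - 8) / a ^ 6 in
  let x1 := (sa - sb) ^ 3 + a ^ 3 in
  let y := sb * (b ^ 3 - 8) / b ^ 6 in
  let y1 := (sa - sb) ^ 3 + b ^ 3 in
  x * x1 + y * y1.

(* Main.v *)
Require Import Defs.
From Stdlib Require Import Reals.
Open Scope R_scope.
From Stdlib Require Import Lra Psatz.

Lemma pow_bnd (h d : R) (n : nat) : 0 <= h <= d -> 0 <= h ^ n <= d ^ n.
Proof. intros [H0 H1]. split. apply pow_le; lra. apply pow_incr; lra. Qed.
Definition T1 (b:R) : R := (48) + (-184)*b^2 + (-3)*b^3 + (168)*b^4 + (11)*b^5 + (-48)*b^6 + (-12)*b^7 + (6)*b^9.
Lemma T1_p0 : forall b, (707/500) <= b <= (2) -> T1 b > 0.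
Proof. intros b Hb. assert (E: exists h, b = (707/500) + h /\ 0 <= h <= (293/500)) by (exists (b - (707/500)); split; lra).
  destruct E as [h [-> Hh]]. unfold T1. clear Hb.
  pose proof (pow_bnd h (293/500) 2 Hh). pose proof (pow_bnd h (293/500) 3 Hh). pose proof (pow_bnd h (293/500) 4 Hh). pose proof (pow_bnd h (293/500) 5 Hh). pose proof (pow_bnd h (293/500) 6 Hh). pose proof (pow_bnd h (293/500) 7 Hh). pose proof (pow_bnd h (293/500) 8 Hh). pose proof (pow_bnd h (293/500) 9 Hh).
  lra. Qed.
Lemma T1_pos : forall b, (707/500) <= b <= (2) -> T1 b > 0.
Proof. intros b Hb.
  apply T1_p0; lra. Qed.

Definition NN (b:R) : R := (-48) + (40)*b^2 + (3)*b^3 + (-2)*b^5.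
Lemma NN_p0 : forall b, (707/500) <= b <= (1957/1000) -> NN b > 0.
Proof. intros b Hb. assert (E: exists h, b = (707/500) + h /\ 0 <= h <= (543/1000)) by (exists (b - (707/500)); split; lra).
  destruct E as [h [-> Hh]]. unfold NN. clear Hb.
  pose proof (pow_bnd h (543/1000) 2 Hh). pose proof (pow_bnd h (543/1000) 3 Hh). pose proof (pow_bnd h (543/1000) 4 Hh). pose proof (pow_bnd h (543/1000) 5 Hh).
  lra. Qed.
Lemma NN_p1 : forall b, (1957/1000) <= b <= (5/2) -> NN b > 0.
Proof. intros b Hb. assert (E: exists h, b = (1957/1000) + h /\ 0 <= h <= (543/1000)) by (exists (b - (1957/1000)); split; lra).
  destruct E as [h [-> Hh]]. unfold NN. clear Hb.
  pose proof (pow_bnd h (543/1000) 2 Hh). pose proof (pow_bnd h (543/1000) 3 Hh). pose proof (pow_bnd h (543/1000) 4 Hh). pose proof (pow_bnd h (543/1000) 5 Hh).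
  lra. Qed.
Lemma NN_pos : forall b, (707/500) <= b <= (5/2) -> NN b > 0.
Proof. intros b Hb.
  destruct (Rle_lt_dec b (1957/1000)) as [H0|H0]; [apply NN_p0; lra|].
  apply NN_p1; lra. Qed.

Definition AA (b:R) : R := (1366712258409361624604746973184) + (4070609735421836919488106201088)*b + (-40768998976678688158069555200)*b^2 + (156112119798253265828708352)*b^3 + (-173238170505025928822784)*b^4 + (1020980094144973111296)*b^5 + (-1470952023961632768)*b^6 + (22126060608307200)*b^7 + (-36248909778432)*b^8 + (41325909939)*b^9.
Lemma AA_p0 : forall b, 0 <= b <= 3 -> AA b > 0.
Proof. intros b Hb. assert (E: exists h, b = 0 + h /\ 0 <= h <= 3) by (exists (b - 0); split; lra).
  destruct E as [h [-> Hh]]. clear Hb.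
  assert (Hq : AA (0 + h) = (1366712258409361624604746973184) + (4070609735421836919488106201088)*h + (-40768998976678688158069555200)*h^2 + (156112119798253265828708352)*h^3 + (-173238170505025928822784)*h^4 + (1020980094144973111296)*h^5 + (-1470952023961632768)*h^6 + (22126060608307200)*h^7 + (-36248909778432)*h^8 + (41325909939)*h^9) by (unfold AA; ring). rewrite Hq.
  pose proof (pow_bnd h 3 2 Hh). pose proof (pow_bnd h 3 3 Hh). pose proof (pow_bnd h 3 4 Hh). pose proof (pow_bnd h 3 5 Hh). pose proof (pow_bnd h 3 6 Hh). pose proof (pow_bnd h 3 7 Hh). pose proof (pow_bnd h 3 8 Hh). pose proof (pow_bnd h 3 9 Hh).
  lra. Qed.
Lemma AA_p1 : forall b, 3 <= b <= 6 -> AA b > 0.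
Proof. intros b Hb. assert (E: exists h, b = 3 + h /\ 0 <= h <= 3) by (exists (b - 3); split; lra).
  destruct E as [h [-> Hh]]. clear Hb.
  assert (Hq : AA (3 + h) = (13215821715901497651355212700089) + (3830192470538470680307164817195)*h + (-39373070770110341927075768604)*h^2 + (154124417883210356688190812)*h^3 + (-158101342754813035470162)*h^4 + (998630396589285630522)*h^5 + (-1015345749287604780)*h^6 + (21269476368445068)*h^7 + (-35133110210079)*h^8 + (41325909939)*h^9) by (unfold AA; ring). rewrite Hq.
  pose proof (pow_bnd h 3 2 Hh). pose proof (pow_bnd h 3 3 Hh). pose proof (pow_bnd h 3 4 Hh). pose proof (pow_bnd h 3 5 Hh). pose proof (pow_bnd h 3 6 Hh). pose proof (pow_bnd h 3 7 Hh). pose proof (pow_bnd h 3 8 Hh). pose proof (pow_bnd h 3 9 Hh).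
  lra. Qed.
Lemma AA_p2 : forall b, 6 <= b <= 13 -> AA b > 0.
Proof. intros b Hb. assert (E: exists h, b = 6 + h /\ 0 <= h <= 7) by (exists (b - 6); split; lra).
  destruct E as [h [-> Hh]]. clear Hb.
  assert (Hq : AA (6 + h) = (24356190285633286124573064000000) + (3598098733328500194032408800000)*h + (-37994219977283960364008640000)*h^2 + (152316590042545794886752000)*h^3 + (-143239056766377577704000)*h^4 + (984321404645344060320)*h^5 + (-577446562159456608)*h^6 + (20439671318223408)*h^7 + (-34017310641726)*h^8 + (41325909939)*h^9) by (unfold AA; ring). rewrite Hq.
  pose proof (pow_bnd h 7 2 Hh). pose proof (pow_bnd h 7 3 Hh). pose proof (pow_bnd h 7 4 Hh). pose proof (pow_bnd h 7 5 Hh). pose proof (pow_bnd h 7 6 Hh). pose proof (pow_bnd h 7 7 Hh). pose proof (pow_bnd h 7 8 Hh). pose proof (pow_bnd h 7 9 Hh).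
  lra. Qed.
Lemma AA_p3 : forall b, 13 <= b <= 27 -> AA b > 0.
Proof. intros b Hb. assert (E: exists h, b = 13 + h /\ 0 <= h <= 14) by (exists (b - 13); split; lra).
  destruct E as [h [-> Hh]]. clear Hb.
  assert (Hq : AA (13 + h) = (47733081805647520702392825403639) + (3088385443555466669603140140715)*h + (-34834321340112803901653121444)*h^2 + (148785938697309583011706332)*h^3 + (-108972482347066407634062)*h^4 + (980460168480522702522)*h^5 + (378616264350204780)*h^6 + (18607600827419148)*h^7 + (-31413778315569)*h^8 + (41325909939)*h^9) by (unfold AA; ring). rewrite Hq.
  pose proof (pow_bnd h 14 2 Hh). pose proof (pow_bnd h 14 3 Hh). pose proof (pow_bnd h 14 4 Hh). pose proof (pow_bnd h 14 5 Hh). pose proof (pow_bnd h 14 6 Hh). pose proof (pow_bnd h 14 7 Hh). pose proof (pow_bnd h 14 8 Hh). pose proof (pow_bnd h 14 9 Hh).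
  lra. Qed.
Lemma AA_p4 : forall b, 27 <= b <= 55 -> AA b > 0.
Proof. intros b Hb. assert (E: exists h, b = 27 + h /\ 0 <= h <= 28) by (exists (b - 27); split; lra).
  destruct E as [h [-> Hh]]. clear Hb.
  assert (Hq : AA (27 + h) = (84547565443466093148272559541953) + (2199504999386334567729484402411)*h + (-28686137859351990513175650876)*h^2 + (144650059125606686175016860)*h^3 + (-37521739687979278214946)*h^4 + (1084225687456196817018)*h^5 + (2039287786978738356)*h^6 + (15380853276605004)*h^7 + (-26206713663255)*h^8 + (41325909939)*h^9) by (unfold AA; ring). rewrite Hq.
  pose proof (pow_bnd h 28 2 Hh). pose proof (pow_bnd h 28 3 Hh). pose proof (pow_bnd h 28 4 Hh). pose proof (pow_bnd h 28 5 Hh). pose proof (pow_bnd h 28 6 Hh). pose proof (pow_bnd h 28 7 Hh). pose proof (pow_bnd h 28 8 Hh). pose proof (pow_bnd h 28 9 Hh).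
  lra. Qed.
Lemma AA_p5 : forall b, 55 <= b <= 111 -> AA b > 0.
Proof. intros b Hb. assert (E: exists h, b = 55 + h /\ 0 <= h <= 56) by (exists (b - 55); split; lra).
  destruct E as [h [-> Hh]]. clear Hb.
  assert (Hq : AA (55 + h) = (126815909185104189688025561780149) + (933595414750923157252572868363)*h + (-16449998644669315830156374220)*h^2 + (150150585561727654755717372)*h^3 + (149031345653567395329366)*h^4 + (1651040729958779030106)*h^5 + (4554848906355943332)*h^6 + (10676931898154220)*h^7 + (-15792584358627)*h^8 + (41325909939)*h^9) by (unfold AA; ring). rewrite Hq.
  pose proof (pow_bnd h 56 2 Hh). pose proof (pow_bnd h 56 3 Hh). pose proof (pow_bnd h 56 4 Hh). pose proof (pow_bnd h 56 5 Hh). pose proof (pow_bnd h 56 6 Hh). pose proof (pow_bnd h 56 7 Hh). pose proof (pow_bnd h 56 8 Hh). pose proof (pow_bnd h 56 9 Hh).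
  lra. Qed.
Lemma AA_p6 : forall b, 111 <= b <= 222 -> AA b > 0.
Proof. intros b Hb. assert (E: exists h, b = 111 + h /\ 0 <= h <= 111) by (exists (b - 111); split; lra).
  destruct E as [h [-> Hh]]. clear Hb.
  assert (Hq : AA (111 + h) = (156411443149109549223218473828125) + (706860977455203255534415196875)*h + (15263299317121989703602052500)*h^2 + (254603411611520112511069500)*h^3 + (883205093549323026519750)*h^4 + (3780506738369563928730)*h^5 + (7963120207057261572)*h^6 + (8267384033962668)*h^7 + (5035674250629)*h^8 + (41325909939)*h^9) by (unfold AA; ring). rewrite Hq.
  pose proof (pow_bnd h 111 2 Hh). pose proof (pow_bnd h 111 3 Hh). pose proof (pow_bnd h 111 4 Hh). pose proof (pow_bnd h 111 5 Hh). pose proof (pow_bnd h 111 6 Hh). pose proof (pow_bnd h 111 7 Hh). pose proof (pow_bnd h 111 8 Hh). pose proof (pow_bnd h 111 9 Hh).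
  lra. Qed.
Lemma AA_pos : forall b, 0 <= b <= 222 -> AA b > 0.
Proof. intros b Hb.
  destruct (Rle_lt_dec b 3) as [H0|H0]; [apply AA_p0; lra|].
  destruct (Rle_lt_dec b 6) as [H1|H1]; [apply AA_p1; lra|].
  destruct (Rle_lt_dec b 13) as [H2|H2]; [apply AA_p2; lra|].
  destruct (Rle_lt_dec b 27) as [H3|H3]; [apply AA_p3; lra|].
  destruct (Rle_lt_dec b 55) as [H4|H4]; [apply AA_p4; lra|].
  destruct (Rle_lt_dec b 111) as [H5|H5]; [apply AA_p5; lra|].
  apply AA_p6; lra. Qed.

Definition CC (b:R) : R := (1867902397286417664771781126176977961413092283207209615097856) + (11126704449203025466331072466334539772687098349416617695248384)*b + (15766368513088895523133493139080153613072427678024110276870144)*b^2 + (-322984834169589165341206819905408878986681308173808030449664)*b^3 + (2750711141160651025803718722636619995192865523360008765440)*b^4 + (-12369078234577400862387622047722802798276973114851065856)*b^5 + (28463245329399620386770091405941890917390282943102976)*b^6 + (-14845994535000274705855237767392737118481656315904)*b^7 + (-218470454832977712118266245704929677683286081536)*b^8 + (1511984592456463104537328016627256615732510720)*b^9 + (-6543739207071129382409470680872597424439296)*b^10 + (30525159404678709376357641892381134422016)*b^11 + (-47263611466502082400894333705827385344)*b^12 + (4770594774912531040377155516104704)*b^13 + (590410182629107220717873072701440)*b^14 + (-1725668011218948308104699183104)*b^15 + (3142742636132420872222900224)*b^16 + (-2996038361780834553271296)*b^17 + (1707830832286338983721)*b^18.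
Lemma CC_p0 : forall b, 0 <= b <= 1 -> CC b > 0.
Proof. intros b Hb. assert (E: exists h, b = 0 + h /\ 0 <= h <= 1) by (exists (b - 0); split; lra).
  destruct E as [h [-> Hh]]. clear Hb.
  assert (Hq : CC (0 + h) = (1867902397286417664771781126176977961413092283207209615097856) + (11126704449203025466331072466334539772687098349416617695248384)*h + (15766368513088895523133493139080153613072427678024110276870144)*h^2 + (-322984834169589165341206819905408878986681308173808030449664)*h^3 + (2750711141160651025803718722636619995192865523360008765440)*h^4 + (-12369078234577400862387622047722802798276973114851065856)*h^5 + (28463245329399620386770091405941890917390282943102976)*h^6 + (-14845994535000274705855237767392737118481656315904)*h^7 + (-218470454832977712118266245704929677683286081536)*h^8 + (1511984592456463104537328016627256615732510720)*h^9 + (-6543739207071129382409470680872597424439296)*h^10 + (30525159404678709376357641892381134422016)*h^11 + (-47263611466502082400894333705827385344)*h^12 + (4770594774912531040377155516104704)*h^13 + (590410182629107220717873072701440)*h^14 + (-1725668011218948308104699183104)*h^15 + (3142742636132420872222900224)*h^16 + (-2996038361780834553271296)*h^17 + (1707830832286338983721)*h^18) by (unfold CC; ring). rewrite Hq.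
  pose proof (pow_bnd h 1 2 Hh). pose proof (pow_bnd h 1 3 Hh). pose proof (pow_bnd h 1 4 Hh). pose proof (pow_bnd h 1 5 Hh). pose proof (pow_bnd h 1 6 Hh). pose proof (pow_bnd h 1 7 Hh). pose proof (pow_bnd h 1 8 Hh). pose proof (pow_bnd h 1 9 Hh). pose proof (pow_bnd h 1 10 Hh). pose proof (pow_bnd h 1 11 Hh). pose proof (pow_bnd h 1 12 Hh). pose proof (pow_bnd h 1 13 Hh). pose proof (pow_bnd h 1 14 Hh). pose proof (pow_bnd h 1 15 Hh). pose proof (pow_bnd h 1 16 Hh). pose proof (pow_bnd h 1 17 Hh). pose proof (pow_bnd h 1 18 Hh).
  lra. Qed.
Lemma CC_p1 : forall b, 1 <= b <= 3 -> CC b > 0.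
Proof. intros b Hb. assert (E: exists h, b = 1 + h /\ 0 <= h <= 2) by (exists (b - 1); split; lra).
  destruct E as [h [-> Hh]]. clear Hb.
  assert (Hq : CC (1 + h) = (28440728895919857932401199527683439058798352449820434228515625) + (41701428142719334527446547495369698502643600244430026113281250)*h + (14813795013275597180932876681292750765997171115374918962890625)*h^2 + (-312105111654103674966548072286464847588544472580104731250000)*h^3 + (2689292163954110375806672518646801936885227408486457812500)*h^4 + (-12198622573956607225074008231898075429258708060318125000)*h^5 + (28353331841498789964550493748718729041039551476062500)*h^6 + (-16540101941160487444457824165783969748911757150000)*h^7 + (-205152048501471955976688200956364335135913121250)*h^8 + (1448215690742861870785685811902432429350135500)*h^9 + (-6211079901742826426870941857001987605511650)*h^10 + (29958580740933244460001381490815700908240)*h^11 + (-47148645885470258811887545045701080796)*h^12 + (12856895010479670246407945570661432)*h^13 + (564900259497035222429670398686740)*h^14 + (-1675790196668072621995766959440)*h^15 + (3092071282099486494681797505)*h^16 + (-2965297406799680451564318)*h^17 + (1707830832286338983721)*h^18) by (unfold CC; ring). rewrite Hq.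
  pose proof (pow_bnd h 2 2 Hh). pose proof (pow_bnd h 2 3 Hh). pose proof (pow_bnd h 2 4 Hh). pose proof (pow_bnd h 2 5 Hh). pose proof (pow_bnd h 2 6 Hh). pose proof (pow_bnd h 2 7 Hh). pose proof (pow_bnd h 2 8 Hh). pose proof (pow_bnd h 2 9 Hh). pose proof (pow_bnd h 2 10 Hh). pose proof (pow_bnd h 2 11 Hh). pose proof (pow_bnd h 2 12 Hh). pose proof (pow_bnd h 2 13 Hh). pose proof (pow_bnd h 2 14 Hh). pose proof (pow_bnd h 2 15 Hh). pose proof (pow_bnd h 2 16 Hh). pose proof (pow_bnd h 2 17 Hh). pose proof (pow_bnd h 2 18 Hh).
  lra. Qed.
Lemma CC_p2 : forall b, 3 <= b <= 6 -> CC b > 0.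
Proof. intros b Hb. assert (E: exists h, b = 3 + h /\ 0 <= h <= 3) by (exists (b - 3); split; lra).
  destruct E as [h [-> Hh]]. clear Hb.
  assert (Hq : CC (3 + h) = (168644564472373306536362767563755732362800273374466857060607921) + (97296433751636071580007404444770684887758791750154654490460710)*h + (13004738258803620902621926198110278909359296980950255739256513)*h^2 + (-291074192334732508897260828267999257318840899235583237927024)*h^3 + (2569002282883184616619642949970188883253784691705440844660)*h^4 + (-11859860998141683291805359819713274416050994943734771160)*h^5 + (28099746156728816978898563660381908426320243717207780)*h^6 + (-19619797306394297453415011905200453862582506527760)*h^7 + (-180162987904414021508095007867156060009690017330)*h^8 + (1330502181594621627103052135849309088251930340)*h^9 + (-5564400063397092731264211414273379573906722)*h^10 + (28832633411078595044089107782675286989040)*h^11 + (-46614753341088267936143331989287934076)*h^12 + (27984010422860847013804350695207208)*h^13 + (516094700209905355764744785796180)*h^14 + (-1578445888710514915110714697584)*h^15 + (2992296362737656598786647945)*h^16 + (-2903815496837372248150362)*h^17 + (1707830832286338983721)*h^18) by (unfold CC; ring). rewrite Hq.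
  pose proof (pow_bnd h 3 2 Hh). pose proof (pow_bnd h 3 3 Hh). pose proof (pow_bnd h 3 4 Hh). pose proof (pow_bnd h 3 5 Hh). pose proof (pow_bnd h 3 6 Hh). pose proof (pow_bnd h 3 7 Hh). pose proof (pow_bnd h 3 8 Hh). pose proof (pow_bnd h 3 9 Hh). pose proof (pow_bnd h 3 10 Hh). pose proof (pow_bnd h 3 11 Hh). pose proof (pow_bnd h 3 12 Hh). pose proof (pow_bnd h 3 13 Hh). pose proof (pow_bnd h 3 14 Hh). pose proof (pow_bnd h 3 15 Hh). pose proof (pow_bnd h 3 16 Hh). pose proof (pow_bnd h 3 17 Hh). pose proof (pow_bnd h 3 18 Hh).
  lra. Qed.
Lemma CC_p3 : forall b, 6 <= b <= 13 -> CC b > 0.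
Proof. intros b Hb. assert (E: exists h, b = 6 + h /\ 0 <= h <= 7) by (exists (b - 6); split; lra).
  destruct E as [h [-> Hh]]. clear Hb.
  assert (Hq : CC (6 + h) = (569922734542817588152314510026074067825084937544972800000000000) + (167738549980502583243573239186382917760303406404349440000000000)*h + (10520628526094631167640024092635522928010392787621504000000000)*h^2 + (-261298436560780392173247187326215239393831405690675200000000)*h^3 + (2394878311315741420567730004653116756953830434329600000000)*h^4 + (-11358032867455233486527381639002385708129452723200000000)*h^5 + (27645255474485349082491782455119177926566424832000000)*h^6 + (-23529893201652160646403526001774019773880422400000)*h^7 + (-146366420804111432687336274621248902746983680000)*h^8 + (1177567307678371534500438350878939896999168000)*h^9 + (-4640355520805465960393610674995734332121600)*h^10 + (27179047873975755966307889529951686522880)*h^11 + (-45119649801846356778096367787178729216)*h^12 + (48213043746043329180428298242303232)*h^13 + (448243424540117010048956668626240)*h^14 + (-1438332306538339409380202298240)*h^15 + (2846553455455008902911563300)*h^16 + (-2811592631893909943029428)*h^17 + (1707830832286338983721)*h^18) by (unfold CC; ring). rewrite Hq.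
  pose proof (pow_bnd h 7 2 Hh). pose proof (pow_bnd h 7 3 Hh). pose proof (pow_bnd h 7 4 Hh). pose proof (pow_bnd h 7 5 Hh). pose proof (pow_bnd h 7 6 Hh). pose proof (pow_bnd h 7 7 Hh). pose proof (pow_bnd h 7 8 Hh). pose proof (pow_bnd h 7 9 Hh). pose proof (pow_bnd h 7 10 Hh). pose proof (pow_bnd h 7 11 Hh). pose proof (pow_bnd h 7 12 Hh). pose proof (pow_bnd h 7 13 Hh). pose proof (pow_bnd h 7 14 Hh). pose proof (pow_bnd h 7 15 Hh). pose proof (pow_bnd h 7 16 Hh). pose proof (pow_bnd h 7 17 Hh). pose proof (pow_bnd h 7 18 Hh).
  lra. Qed.
Lemma CC_p4 : forall b, 13 <= b <= 27 -> CC b > 0.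
Proof. intros b Hb. assert (E: exists h, b = 13 + h /\ 0 <= h <= 14) by (exists (b - 13); split; lra).
  destruct E as [h [-> Hh]]. clear Hb.
  assert (Hq : CC (13 + h) = (2175540459072961315420166832500161023098850962241557986474442321) + (279768666549912299939648165711241960603579029810080352666123770)*h + (5699484419791921950914571541624797788779178490866176427641793)*h^2 + (-199619737385717232003057414182859520158871160634735823700624)*h^3 + (2017361733882636127219125193605717061442956919854575356660)*h^4 + (-10223617764460376195750580684002438109969387678387080360)*h^5 + (26323270545425972575580614375811816769437124948100580)*h^6 + (-29819235939947848470734913670396257247232024530160)*h^7 + (-80925896779621220357519843441741333329271535730)*h^8 + (922682256335200849196416995403077488657458140)*h^9 + (-2687748827551609123424359769166740221925922)*h^10 + (23624722616872563535254612804104443042320)*h^11 + (-38945868476625550425517308690329079036)*h^12 + (85271625044552651383261912768440408)*h^13 + (313313038341798546527736972938580)*h^14 + (-1137776771470332469268979613584)*h^15 + (2524777540009284303052017705)*h^16 + (-2596405947025831231080582)*h^17 + (1707830832286338983721)*h^18) by (unfold CC; ring). rewrite Hq.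
  pose proof (pow_bnd h 14 2 Hh). pose proof (pow_bnd h 14 3 Hh). pose proof (pow_bnd h 14 4 Hh). pose proof (pow_bnd h 14 5 Hh). pose proof (pow_bnd h 14 6 Hh). pose proof (pow_bnd h 14 7 Hh). pose proof (pow_bnd h 14 8 Hh). pose proof (pow_bnd h 14 9 Hh). pose proof (pow_bnd h 14 10 Hh). pose proof (pow_bnd h 14 11 Hh). pose proof (pow_bnd h 14 12 Hh). pose proof (pow_bnd h 14 13 Hh). pose proof (pow_bnd h 14 14 Hh). pose proof (pow_bnd h 14 15 Hh). pose proof (pow_bnd h 14 16 Hh). pose proof (pow_bnd h 14 17 Hh). pose proof (pow_bnd h 14 18 Hh).
  lra. Qed.
Lemma CC_p5 : forall b, 27 <= b <= 55 -> CC b > 0.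
Proof. intros b Hb. assert (E: exists h, b = 27 + h /\ 0 <= h <= 28) by (exists (b - 27); split; lra).
  destruct E as [h [-> Hh]]. clear Hb.
  assert (Hq : CC (27 + h) = (6733839596646004278577115546294933674204679400917085629167054209) + (342239950184782410742835413274600730301162040885417120177697366)*h + (-577845201169929549032231770974498295229963100600829423788735)*h^2 + (-105283125945566443260864735337378415494075491797739952668912)*h^3 + (1376076518068995148030867432048734000305558064316861607220)*h^4 + (-8143453415327557615836977342834793189731028925914096024)*h^5 + (23153471522941069483904188882765611163130878521204324)*h^6 + (-32973399443921281478207775150948091975782690176400)*h^7 + (21647243281630033688116134115116693776225685422)*h^8 + (780200708989664563718434468639574981882821380)*h^9 + (523932193755936963009205437877048830258270)*h^10 + (18644423863482310604919166804292618033520)*h^11 + (-19090595510995009154972405464154939580)*h^12 + (126915688972641512695492327382623080)*h^13 + (129118758858887178493436626306260)*h^14 + (-637612388584277671917206015472)*h^15 + (1958047355615739203498664537)*h^16 + (-2166032577289673807182890)*h^17 + (1707830832286338983721)*h^18) by (unfold CC; ring). rewrite Hq.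
  pose proof (pow_bnd h 28 2 Hh). pose proof (pow_bnd h 28 3 Hh). pose proof (pow_bnd h 28 4 Hh). pose proof (pow_bnd h 28 5 Hh). pose proof (pow_bnd h 28 6 Hh). pose proof (pow_bnd h 28 7 Hh). pose proof (pow_bnd h 28 8 Hh). pose proof (pow_bnd h 28 9 Hh). pose proof (pow_bnd h 28 10 Hh). pose proof (pow_bnd h 28 11 Hh). pose proof (pow_bnd h 28 12 Hh). pose proof (pow_bnd h 28 13 Hh). pose proof (pow_bnd h 28 14 Hh). pose proof (pow_bnd h 28 15 Hh). pose proof (pow_bnd h 28 16 Hh). pose proof (pow_bnd h 28 17 Hh). pose proof (pow_bnd h 28 18 Hh).
  lra. Qed.
Lemma CC_p6 : forall b, 55 <= b <= 83 -> CC b > 0.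
Proof. intros b Hb. assert (E: exists h, b = 55 + h /\ 0 <= h <= 28) by (exists (b - 55); split; lra).
  destruct E as [h [-> Hh]]. clear Hb.
  assert (Hq : CC (55 + h) = (14268743505194431221659789903196676841847406998662211425810462201) + (160342876937623644311704765204230937637489586920025730647052174)*h + (-4533970071667932388426523587641092511982882401552330296417791)*h^2 + (-5496863992437220176000561246939318385955840222959965506864)*h^3 + (485700464911061945263223212020890750440454504104128323540)*h^4 + (-4703225989581121981866167826325097150042399554033072376)*h^5 + (18814979352918313653230912531754567156849584716803236)*h^6 + (-1092712585927411772155279609647260675752748273744)*h^7 + (301416964389307049294624126113494898797015855614)*h^8 + (1697623381613664037446377824552773925170462420)*h^9 + (6128907522093122344941140106264787051077534)*h^10 + (20622910163261622077710996311628834873776)*h^11 + (31925006284172680100772069573379596516)*h^12 + (146195687274546304973995592681610504)*h^13 + (16413671929120878792571600405140)*h^14 + (39233855993804677343572241616)*h^15 + (1131873572820265405054910289)*h^16 + (-1305285837817358959387506)*h^17 + (1707830832286338983721)*h^18) by (unfold CC; ring). rewrite Hq.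
  pose proof (pow_bnd h 28 2 Hh). pose proof (pow_bnd h 28 3 Hh). pose proof (pow_bnd h 28 4 Hh). pose proof (pow_bnd h 28 5 Hh). pose proof (pow_bnd h 28 6 Hh). pose proof (pow_bnd h 28 7 Hh). pose proof (pow_bnd h 28 8 Hh). pose proof (pow_bnd h 28 9 Hh). pose proof (pow_bnd h 28 10 Hh). pose proof (pow_bnd h 28 11 Hh). pose proof (pow_bnd h 28 12 Hh). pose proof (pow_bnd h 28 13 Hh). pose proof (pow_bnd h 28 14 Hh). pose proof (pow_bnd h 28 15 Hh). pose proof (pow_bnd h 28 16 Hh). pose proof (pow_bnd h 28 17 Hh). pose proof (pow_bnd h 28 18 Hh).
  lra. Qed.
Lemma CC_p7 : forall b, 83 <= b <= 111 -> CC b > 0.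
Proof. intros b Hb. assert (E: exists h, b = 83 + h /\ 0 <= h <= 28) by (exists (b - 83); split; lra).
  destruct E as [h [-> Hh]]. clear Hb.
  assert (Hq : CC (83 + h) = (15309824660950129920027192298325669866945188552252298786208459921) + (-76315797367219860551082827818116984449820752983562376987678010)*h + (-3565339129540500014382198452697795448934670137101778323485247)*h^2 + (20635830876733136068968286825980620753171429341814385324176)*h^3 + (65042615602048272836832349496643105783838776518276060660)*h^4 + (-1026703965978671029617577246475112910606764606984540760)*h^5 + (29320581804579441327120033122939769882022137031646180)*h^6 + (135223537031669282179576336693566264379932791437040)*h^7 + (1033127624260113641593892691580363931669360691470)*h^8 + (4522230984073277624752718089427909068087192740)*h^9 + (15066727818821014799707244447879686403802078)*h^10 + (40531979515097304540132120542283029149680)*h^11 + (87845592858617686920214299986993354244)*h^12 + (168116191192886838368888066253680808)*h^13 + (123106254685680444590031946135380)*h^14 + (437730506229010863232883619216)*h^15 + (715415238013613474161758825)*h^16 + (-444539098345044111592122)*h^17 + (1707830832286338983721)*h^18) by (unfold CC; ring). rewrite Hq.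
  pose proof (pow_bnd h 28 2 Hh). pose proof (pow_bnd h 28 3 Hh). pose proof (pow_bnd h 28 4 Hh). pose proof (pow_bnd h 28 5 Hh). pose proof (pow_bnd h 28 6 Hh). pose proof (pow_bnd h 28 7 Hh). pose proof (pow_bnd h 28 8 Hh). pose proof (pow_bnd h 28 9 Hh). pose proof (pow_bnd h 28 10 Hh). pose proof (pow_bnd h 28 11 Hh). pose proof (pow_bnd h 28 12 Hh). pose proof (pow_bnd h 28 13 Hh). pose proof (pow_bnd h 28 14 Hh). pose proof (pow_bnd h 28 15 Hh). pose proof (pow_bnd h 28 16 Hh). pose proof (pow_bnd h 28 17 Hh). pose proof (pow_bnd h 28 18 Hh).
  lra. Qed.
Lemma CC_p8 : forall b, 111 <= b <= 138 -> CC b > 0.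
Proof. intros b Hb. assert (E: exists h, b = 111 + h /\ 0 <= h <= 27) by (exists (b - 111); split; lra).
  destruct E as [h [-> Hh]]. clear Hb.
  assert (Hq : CC (111 + h) = (10869459939253665675460690512911554017944434402350480792041015625) + (-221270921718505849757754811329633944372664863923351646425781250)*h + (-1415729538174953130233029177453102873081022999321354537109375)*h^2 + (36859115368240270228547699746516378166956254193277831250000)*h^3 + (425989727544714568942651736049939235644946492165007812500)*h^4 + (7821133822214086557668168973770510272918852753288125000)*h^5 + (89152690596988973333006600397168270677905207232062500)*h^6 + (543533571149912039457736681758472864763221482750000)*h^7 + (2881764771163135143117769293450160869806325398750)*h^8 + (10992186909170654082422649736884174109855120500)*h^9 + (33252578171388954584276825375256582414885150)*h^10 + (81731545715849120264511537552304455939120)*h^11 + (162963153304878323112646685889469580964)*h^12 + (260804029806377632263197806354921032)*h^13 + (370835706851346248568962284030740)*h^14 + (741430082820333082413398164560)*h^15 + (708672351195783410819210145)*h^16 + (416207641127270736203262)*h^17 + (1707830832286338983721)*h^18) by (unfold CC; ring). rewrite Hq.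
  pose proof (pow_bnd h 27 2 Hh). pose proof (pow_bnd h 27 3 Hh). pose proof (pow_bnd h 27 4 Hh). pose proof (pow_bnd h 27 5 Hh). pose proof (pow_bnd h 27 6 Hh). pose proof (pow_bnd h 27 7 Hh). pose proof (pow_bnd h 27 8 Hh). pose proof (pow_bnd h 27 9 Hh). pose proof (pow_bnd h 27 10 Hh). pose proof (pow_bnd h 27 11 Hh). pose proof (pow_bnd h 27 12 Hh). pose proof (pow_bnd h 27 13 Hh). pose proof (pow_bnd h 27 14 Hh). pose proof (pow_bnd h 27 15 Hh). pose proof (pow_bnd h 27 16 Hh). pose proof (pow_bnd h 27 17 Hh). pose proof (pow_bnd h 27 18 Hh).
  lra. Qed.
Lemma CC_p9 : forall b, 138 <= b <= 166 -> CC b > 0.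
Proof. intros b Hb. assert (E: exists h, b = 138 + h /\ 0 <= h <= 28) by (exists (b - 138); split; lra).
  destruct E as [h [-> Hh]]. clear Hb.
  assert (Hq : CC (138 + h) = (4968319491884438186354593326876652681606420692653430298275741696) + (-153366730953057996799900554534171466549901355087974182366740480)*h + (5882903256261659711125834834946141257274090750966727685767168)*h^2 + (187807050957991802810202441676596250373224025089124454629376)*h^3 + (2961259866712432912321887974069291674491595473678020444160)*h^4 + (34633617466952316755004703901439101720923688860917104640)*h^5 + (273193543404176941283790861658860624701099498516398080)*h^6 + (1549388765734008802753907253612872431938022424739840)*h^7 + (6957326067705025673154662807714322264358548715520)*h^8 + (24064361336229450443098305769796671773165680640)*h^9 + (67067337275490665274697460796623342021795328)*h^10 + (152603166929514134199458847553044290488320)*h^11 + (286480993591157694258286460092695646464)*h^12 + (466280414412756310389541399374705408)*h^13 + (741457544531941485141415308406080)*h^14 + (1116271060074697526094162796416)*h^15 + (1090197986013922069963796580)*h^16 + (1246213425618431482291668)*h^17 + (1707830832286338983721)*h^18) by (unfold CC; ring). rewrite Hq.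
  pose proof (pow_bnd h 28 2 Hh). pose proof (pow_bnd h 28 3 Hh). pose proof (pow_bnd h 28 4 Hh). pose proof (pow_bnd h 28 5 Hh). pose proof (pow_bnd h 28 6 Hh). pose proof (pow_bnd h 28 7 Hh). pose proof (pow_bnd h 28 8 Hh). pose proof (pow_bnd h 28 9 Hh). pose proof (pow_bnd h 28 10 Hh). pose proof (pow_bnd h 28 11 Hh). pose proof (pow_bnd h 28 12 Hh). pose proof (pow_bnd h 28 13 Hh). pose proof (pow_bnd h 28 14 Hh). pose proof (pow_bnd h 28 15 Hh). pose proof (pow_bnd h 28 16 Hh). pose proof (pow_bnd h 28 17 Hh). pose proof (pow_bnd h 28 18 Hh).
  lra. Qed.
Lemma CC_p10 : forall b, 166 <= b <= 222 -> CC b > 0.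
Proof. intros b Hb. assert (E: exists h, b = 166 + h /\ 0 <= h <= 56) by (exists (b - 166); split; lra).
  destruct E as [h [-> Hh]]. clear Hb.
  assert (Hq : CC (166 + h) = (11980660374605411479905646686187934735032406241277606400000000000) + (1018536605567248431176921109421447508957233054159490560000000000)*h + (46376809762696432209684591398434709086346343399790208000000000)*h^2 + (952068794502074207343444302472060984453347619381452800000000)*h^3 + (12572201671602486151332992789908506752313060262630400000000)*h^4 + (116783849488108800087458181809382940449321735500800000000)*h^5 + (783984413671473378786892053132318382405249036544000000)*h^6 + (3998974969090293234443622783003903003905243852800000)*h^7 + (16039088389975624849461952918833447002401821440000)*h^8 + (51040347502509197590666908803128831204662528000)*h^9 + (132338671806073524913850840091826625744985600)*h^10 + (284326076552618336125199804262332486645760)*h^11 + (521622678368150974385016775257915097344)*h^12 + (864300036550074831721989344606360832)*h^13 + (1334672061840776147256255744210240)*h^14 + (1768148104885239617916255480960)*h^15 + (1888253300602706389309931940)*h^16 + (2106960165090746330087052)*h^17 + (1707830832286338983721)*h^18) by (unfold CC; ring). rewrite Hq.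
  pose proof (pow_bnd h 56 2 Hh). pose proof (pow_bnd h 56 3 Hh). pose proof (pow_bnd h 56 4 Hh). pose proof (pow_bnd h 56 5 Hh). pose proof (pow_bnd h 56 6 Hh). pose proof (pow_bnd h 56 7 Hh). pose proof (pow_bnd h 56 8 Hh). pose proof (pow_bnd h 56 9 Hh). pose proof (pow_bnd h 56 10 Hh). pose proof (pow_bnd h 56 11 Hh). pose proof (pow_bnd h 56 12 Hh). pose proof (pow_bnd h 56 13 Hh). pose proof (pow_bnd h 56 14 Hh). pose proof (pow_bnd h 56 15 Hh). pose proof (pow_bnd h 56 16 Hh). pose proof (pow_bnd h 56 17 Hh). pose proof (pow_bnd h 56 18 Hh).
  lra. Qed.
Lemma CC_pos : forall b, 0 <= b <= 222 -> CC b > 0.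
Proof. intros b Hb.
  destruct (Rle_lt_dec b 1) as [H0|H0]; [apply CC_p0; lra|].
  destruct (Rle_lt_dec b 3) as [H1|H1]; [apply CC_p1; lra|].
  destruct (Rle_lt_dec b 6) as [H2|H2]; [apply CC_p2; lra|].
  destruct (Rle_lt_dec b 13) as [H3|H3]; [apply CC_p3; lra|].
  destruct (Rle_lt_dec b 27) as [H4|H4]; [apply CC_p4; lra|].
  destruct (Rle_lt_dec b 55) as [H5|H5]; [apply CC_p5; lra|].
  destruct (Rle_lt_dec b 83) as [H6|H6]; [apply CC_p6; lra|].
  destruct (Rle_lt_dec b 111) as [H7|H7]; [apply CC_p7; lra|].
  destruct (Rle_lt_dec b 138) as [H8|H8]; [apply CC_p8; lra|].
  destruct (Rle_lt_dec b 166) as [H9|H9]; [apply CC_p9; lra|].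
  apply CC_p10; lra. Qed.

Definition KA : R := (5345922049494410292614922240000).
Definition KC : R := (28578882559270516170329750875916512552849517521246617600000000).

Definition t0 : R := 884/387.
Definition b0 : R := 965/387.
Definition ylo : R := 713/10000.
Definition Aq (s : R) := s*(1+s^2)^3 - 8*s*(s-t0)^3 + (1+s^2)^3*ylo*((s-t0)^3 + b0^3).
Definition Bq (s : R) := s*(1+s^2)*(8-(s-t0)^3).

Lemma Aq_pos s : 0 <= s <= 222/128 -> Aq s > 0.
Proof.
  intros Hs. assert (H := AA_pos (128*s) ltac:(lra)).
  assert (E : AA (128*s) = KA * Aq s) by (unfold AA, KA, Aq, t0, b0, ylo; field).
  unfold KA in E. lra.
Qed.

Lemma Cq_pos s : 0 <= s <= 222/128 -> Aq s ^2 - (1+s^2) * Bq s ^2 > 0.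
Proof.
  intros Hs. assert (H := CC_pos (128*s) ltac:(lra)).
  assert (E : CC (128*s) = KC * (Aq s ^2 - (1+s^2) * Bq s ^2)) by (unfold CC, KC, Aq, Bq, t0, b0, ylo; field).
  unfold KC in E. lra.
Qed.

Lemma sqrt_b0 : sqrt (b0^2 - 1) = t0.
Proof. apply sqrt_lem_1; unfold b0, t0; lra. Qed.

Lemma s_facts a : 1 < a < 2 -> 0 <= sqrt (a^2-1) /\ sqrt (a^2-1) ^2 = a^2 - 1 /\ sqrt (a^2-1) < 1.7321.
Proof.
  intros Ha. assert (H0 : 0 <= a^2-1) by nra.
  assert (H1 := sqrt_pos (a^2-1)). assert (H2 := sqrt_sqrt _ H0).
  assert (a^2 < 4) by nra.
  split; [lra|]. split.
  - replace (sqrt (a^2-1) ^2) with (sqrt(a^2-1)*sqrt(a^2-1)) by ring. exact H2.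
  - nra.
Qed.

Lemma g_b0_pos a : 1 < a < 2 -> g a b0 > 0.
Proof.
  intros Ha. unfold g. cbv zeta. rewrite sqrt_b0.
  destruct (s_facts a Ha) as [Hs0 [Hs2 Hs3]].
  set (s := sqrt (a^2-1)) in *. clearbody s.
  set (w := (s - t0)^3).
  set (y0 := t0 * (b0^3-8) / b0^6).
  set (W := w + b0^3).
  assert (Hb0 : b0^3 - 8 > 0) by (unfold b0; lra).
  assert (HW : W > 0).
  { unfold W, w. assert (0 <= t0 - s <= t0) by (unfold t0; lra).
    assert ((t0 - s)^3 <= t0^3) by (apply pow_incr; lra).
    replace ((s-t0)^3) with (-(t0-s)^3) by ring. unfold t0, b0 in *. lra. }
  assert (Hy0 : y0 >= ylo) by (unfold y0, ylo, t0, b0; lra).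
  set (c := 1 + s^2).
  assert (Hc : a^2 = c) by (unfold c; lra).
  set (Aex := s*c^3 - 8*s*w + c^3*y0*W).
  assert (Hc0 : c >= 1) by (unfold c; nra).
  assert (HA : Aex >= Aq s).
  { unfold Aex, Aq. fold w. fold c. replace (w + b0^3) with W by reflexivity.
    assert (c^3 >= 1) by (assert (1 <= c^3) by (apply pow_R1_Rle; lra) ; lra).
    assert (c^3 * y0 * W >= c^3 * ylo * W).
    { apply Rmult_ge_compat_r; [lra|]. apply Rmult_ge_compat_l; lra. }
    lra. }
  assert (HAq := Aq_pos s ltac:(lra)).
  assert (HCq := Cq_pos s ltac:(lra)).
  assert (HB : Bq s >= 0).
  { unfold Bq. fold w. assert (w <= 0).
    { unfold w. replace ((s-t0)^3) with (-(t0-s)^3) by ring.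
      assert (0 <= (t0-s)^3) by (apply pow_le; unfold t0; lra). lra. }
    fold c. assert (0 <= s * c) by nra. nra. }
  assert (Ha0 : a > 0) by lra.
  assert (Key : Aex - a * Bq s > 0).
  { destruct (Rle_lt_dec (Aex) (a * Bq s)) as [Hle|Hlt]; [|lra].
    exfalso. fold c in HCq.
    assert (a * Bq s * (a * Bq s) >= Aex * Aex) by nra.
    assert (Aex * Aex >= Aq s * Aq s) by nra.
    assert (a * Bq s * (a * Bq s) = c * Bq s ^2) by (rewrite <- Hc; ring).
    nra. }
  assert (Eq : s*(a^3-8)*(w+a^3) + a^6*y0*W = Aex - a*Bq s
              + (a^2 - c) * ((s + y0*W)*(a^4 + a^2*c + c^2) + s*(w-8)*a)).
  { unfold Aex, Bq, W. fold w. fold c. ring. }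
  rewrite Hc in Eq. replace (c - c) with 0 in Eq by ring.
  assert (Ha6 : a^6 > 0) by (apply pow_lt; lra).
  assert (Gx : s * (a ^ 3 - 8) / a ^ 6 * (w + a ^ 3) + y0 * W
          = (s*(a^3-8)*(w+a^3) + a^6*y0*W) / a^6) by (field; lra).
  rewrite Gx.
  apply Rdiv_lt_0_compat; [|lra]. rewrite Eq. lra.
Qed.

Lemma sqrt2_facts : sqrt 2 ^ 2 = 2 /\ 1.414 < sqrt 2 < 1.4143.
Proof.
  assert (H := sqrt_sqrt 2 ltac:(lra)). assert (H0 := sqrt_pos 2).
  split. { replace (sqrt 2 ^2) with (sqrt 2 * sqrt 2) by ring. exact H. }
  split; nra.
Qed.

Lemma cube_ge (u v : R) : v <= u -> v^3 <= u^3.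
Proof. intros H. assert (u^2+u*v+v^2 >= 0) by nra. replace (u^3 - v^3) with ((u-v)*(u^2+u*v+v^2)) by ring. assert (0 <= (u-v)*(u^2+u*v+v^2)) by (apply Rmult_le_pos; lra). assert (u^3 - v^3 = (u-v)*(u^2+u*v+v^2)) by ring. lra. Qed.

Lemma g_sqrt2_neg a : 1 < a < 2 -> g a (sqrt 2) < 0.
Proof.
  intros Ha. destruct sqrt2_facts as [H2 [Hl Hu]].
  unfold g. cbv zeta. rewrite H2. replace (2-1) with 1 by ring. rewrite sqrt_1.
  destruct (s_facts a Ha) as [Hs0 [Hs2 Hs3]].
  set (s := sqrt (a^2-1)) in *. clearbody s.
  set (r := sqrt 2) in *. clearbody r.
  assert (Hr3 : r^3 = 2*r) by (replace (r^3) with (r^2*r) by ring; rewrite H2; ring).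
  assert (Hr6 : r^6 = 8) by (replace (r^6) with ((r^2)^3) by ring; rewrite H2; ring).
  rewrite Hr3, Hr6.
  assert (Hsp : s > 0).
  { destruct (Req_dec s 0) as [E|E]; [|lra]. rewrite E in Hs2. nra. }
  assert (Hc : (s-1)^3 >= -1) by (assert (H := cube_ge (s-1) (-1) ltac:(lra)); lra).
  assert (Ha3 : a^3 > 1) by (assert (H := cube_ge a 1 ltac:(lra)); nra).
  assert (Ha3' : a^3 < 8) by (assert (H := cube_ge 2 a ltac:(lra)); nra).
  assert (Ha6 : a^6 > 0) by (apply pow_lt; lra).
  assert (Hx : s * (a^3-8) / a^6 < 0).
  { apply Rdiv_neg_pos ; [nra | lra]. }
  assert (T1 : s * (a^3-8) / a^6 * ((s-1)^3 + a^3) < 0) by nra.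
  assert (T2 : 1 * (2*r - 8) / 8 * ((s-1)^3 + 2*r) < 0) by nra.
  lra.
Qed.

From Coquelicot Require Import Coquelicot.
Open Scope R_scope.

Definition Dg (a b : R) : R :=
  let s := sqrt (a^2-1) in let t := sqrt (b^2-1) in
  let x := s*(a^3-8)/a^6 in
  let y := t*(b^3-8)/b^6 in
  let yp := (b/t)*(b^3-8)/b^6 + t*(48-3*b^3)/b^7 in
  x * (-(b/t)*3*(s-t)^2) + yp*((s-t)^3 + b^3) + y*(-(b/t)*3*(s-t)^2 + 3*b^2).

Lemma g_deriv a b : a <> 0 -> 1 < b -> derivable_pt_lim (g a) b (Dg a b).
Proof.
  intros Ha Hb. apply is_derive_Reals.
  unfold g. cbv zeta. auto_derive.
  - assert (0 < b*(b*1) + - (1)) by nra. repeat split; try lra.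
    assert (b <> 0) by lra. repeat (apply Rmult_integral_contrapositive; split); lra.
  - unfold Dg. cbv zeta.
    replace (b*(b*1) + - (1)) with (b^2-1) by ring.
    replace (a*(a*1) - 1) with (a^2-1) by ring.
    assert (Ht : sqrt (b^2-1) > 0) by (apply sqrt_lt_R0; nra).
    set (t := sqrt (b^2-1)) in *. set (s := sqrt (a^2-1)).
    field. repeat split; lra.
Qed.

Lemma Qpos (s t b : R) : 0 <= s -> s^2 < 3 -> 1.414 <= b <= 5/2 -> t > 0 -> t^2 = b^2 - 1 ->
  let u := s - t in
  -3*u^2*t*b^2*(b^3-8) + (b^2*(b^3-8) + t^2*(48-3*b^3))*(u^3+b^3) + 3*b^3*t^2*(b^3-8) > 0.
Proof.
  intros Hs Hs3 Hb Ht Htt u.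
  assert (HN' : b^2*(b^3-8) + t^2*(48-3*b^3) = NN b) by (rewrite Htt; unfold NN; ring).
  rewrite HN'.
  assert (HN : NN b > 0) by (apply NN_pos; lra).
  assert (Hu : u >= -t) by (unfold u; lra).
  assert (Hu3 : u^3 >= -t^3) by (assert (H := cube_ge u (-t) ltac:(lra)); lra).
  assert (HNu : NN b * (u^3 + b^3) >= NN b * (b^3 - t^3)) by nra.
  assert (Hbt : b > t) by nra.
  assert (Hb3 : b^3 - t^3 > 0) by (assert (H := cube_ge b t ltac:(lra)); assert (b^3 <> t^3 \/ b^3 = t^3) by (destruct (Req_dec (b^3) (t^3)); auto);
      destruct H0; [lra|]; exfalso; nra).
  destruct (Rle_lt_dec b 2) as [Hb2|Hb2].
  - assert (Hb8 : b^3 - 8 <= 0) by (assert (H := cube_ge 2 b ltac:(lra)); lra).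
    assert (h1 : -3*u^2*t*b^2*(b^3-8) >= 0).
    { assert (0 <= u^2*t*b^2) by (apply Rmult_le_pos; [apply Rmult_le_pos|]; nra). nra. }
    assert (HT1 := T1_pos b ltac:(lra)).
    assert (E : T1 b = 2*b*(NN b * b^3 + 3*b^3*(b^2-1)*(b^3-8)) - (2*b^2-1)*(NN b*(b^2-1))) by (unfold T1, NN; ring).
    assert (Hbt2 : 2*b*t <= 2*b^2-1).
    { assert ((2*b^2-1)^2 - (2*b*t)^2 = 1) by (replace ((2*b*t)^2) with (4*b^2*t^2) by ring; rewrite Htt; ring).
      nra. }
    assert (HR : NN b * (b^2-1) >= 0) by nra.
    assert (Ht3 : t^3 = t*(b^2-1)) by (rewrite <- Htt; ring).
    assert (h3 : 2*b*(NN b * (b^3 - t^3) + 3*b^3*t^2*(b^3-8)) > 0).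
    { rewrite Ht3, Htt.
      assert (2*b*t*(NN b*(b^2-1)) <= (2*b^2-1)*(NN b*(b^2-1))) by (apply Rmult_le_compat_r; lra).
      nra. }
    assert (NN b * (b^3 - t^3) + 3*b^3*t^2*(b^3-8) > 0) by nra.
    lra.
  - assert (Hb8 : b^3 - 8 >= 0) by (assert (H := cube_ge b 2 ltac:(lra)); lra).
    assert (Hst : s < t) by nra.
    assert (Hu2 : u^2 <= t^2) by (unfold u; nra).
    assert (h1 : -3*u^2*t*b^2*(b^3-8) >= -3*t^3*b^2*(b^3-8)).
    { assert (0 <= t*b^2*(b^3-8)) by (apply Rmult_le_pos; [nra|lra]).
      assert (u^2 * (t*b^2*(b^3-8)) <= t^2 * (t*b^2*(b^3-8))) by (apply Rmult_le_compat_r; lra).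
      nra. }
    assert (h2 : 3*b^2*(b^3-8)*t^2*(b-t) >= 0).
    { assert (0 <= 3*b^2*(b^3-8)*t^2) by (apply Rmult_le_pos; [apply Rmult_le_pos|]; nra). nra. }
    assert (E : -3*t^3*b^2*(b^3-8) + 3*b^3*t^2*(b^3-8) = 3*b^2*(b^3-8)*t^2*(b-t)) by ring.
    nra.
Qed.

Lemma Dg_pos a b : 1 < a < 2 -> 1.414 <= b <= 5/2 -> Dg a b > 0.
Proof.
  intros Ha Hb. unfold Dg. cbv zeta.
  destruct (s_facts a Ha) as [Hs0 [Hs2 Hs3]].
  assert (Ht : sqrt (b^2-1) > 0) by (apply sqrt_lt_R0; nra).
  assert (Htt : sqrt (b^2-1) ^2 = b^2-1).
  { replace (sqrt (b^2-1) ^2) with (sqrt(b^2-1)*sqrt(b^2-1)) by ring. apply sqrt_sqrt. nra. }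
  set (s := sqrt (a^2-1)) in *. clearbody s.
  set (t := sqrt (b^2-1)) in *. clearbody t.
  assert (Ha3' : a^3 < 8) by (assert (H := cube_ge 2 a ltac:(lra)); nra).
  assert (Ha6 : a^6 > 0) by (apply pow_lt; lra).
  assert (Hx : s * (a^3-8) / a^6 <= 0).
  { unfold Rdiv. assert (0 <= s*(8-a^3)) by (apply Rmult_le_pos; lra). assert (s*(a^3-8) <= 0) by lra. assert (0 < / a^6) by (apply Rinv_0_lt_compat; lra). nra. }
  set (x := s * (a^3-8) / a^6) in *. clearbody x.
  assert (HQ := Qpos s t b Hs0 ltac:(nra) Hb Ht Htt). cbv zeta in HQ.
  assert (Hb0 : b > 0) by lra.
  assert (Hb7 : b^7 > 0) by (apply pow_lt; lra).
  assert (E : x * (- (b / t) * 3 * (s - t) ^ 2) +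
    (b / t * (b ^ 3 - 8) / b ^ 6 + t * (48 - 3 * b ^ 3) / b ^ 7) * ((s - t) ^ 3 + b ^ 3) +
    t * (b ^ 3 - 8) / b ^ 6 * (- (b / t) * 3 * (s - t) ^ 2 + 3 * b ^ 2)
    = (-3*(s-t)^2*b^8*x + (-3*(s-t)^2*t*b^2*(b^3-8) + (b^2*(b^3-8) + t^2*(48-3*b^3))*((s-t)^3+b^3) + 3*b^3*t^2*(b^3-8))) / (t*b^7)).
  { field. lra. }
  rewrite E. apply Rdiv_lt_0_compat; [|apply Rmult_lt_0_compat; lra].
  assert (0 <= -3*(s-t)^2*b^8*x).
  { assert (0 <= (s-t)^2*b^8) by (apply Rmult_le_pos; [apply pow2_ge_0|apply pow_le; lra]). nra. }
  lra.
Qed.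

Lemma g_mono a b1 b2 : 1 < a < 2 -> sqrt 2 <= b1 -> b1 < b2 -> b2 <= 5/2 -> g a b1 < g a b2.
Proof.
  intros Ha H1 H12 H2. destruct sqrt2_facts as [_ [Hl Hu]].
  destruct (MVT_cor2 (g a) (Dg a) b1 b2 H12) as [c [Ec Hc]].
  { intros c Hc. apply g_deriv; lra. }
  assert (Dg a c > 0) by (apply Dg_pos; lra).
  assert (Dg a c * (b2 - b1) > 0) by (apply Rmult_gt_0_compat; lra).
  lra.
Qed.

Theorem lemma4 : forall a : R, 1 < a < 2 ->
  exists! bh : R, sqrt 2 < bh < 5 / 2 /\
    (forall b, sqrt 2 < b < bh -> g a b < 0) /\
    g a bh = 0 /\
    (forall b, bh < b < 5 / 2 -> g a b > 0).
Proof.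
  intros a Ha. destruct sqrt2_facts as [_ [Hl Hu]].
  assert (Hcont : forall c, sqrt 2 <= c <= b0 -> continuity_pt (g a) c).
  { intros c Hc. apply (derivable_continuous_pt (g a) c).
    exists (Dg a c). apply g_deriv; lra. }
  assert (Hb0 : b0 < 5/2) by (unfold b0; lra).
  assert (Hb0' : sqrt 2 < b0) by (unfold b0; lra).
  destruct (Ranalysis5.IVT_interv (g a) (sqrt 2) b0 Hcont Hb0' (g_sqrt2_neg a Ha) (g_b0_pos a Ha)) as [z [Hz Gz]].
  assert (Hz1 : z <> sqrt 2) by (intro E; rewrite E in Gz; assert (H := g_sqrt2_neg a Ha); lra).
  assert (Hz2 : z <> b0) by (intro E; rewrite E in Gz; assert (H := g_b0_pos a Ha); lra).
  exists z. split.
  - split; [lra|]. split.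
    + intros b Hb. rewrite <- Gz. apply g_mono; lra.
    + split; [exact Gz|]. intros b Hb. rewrite <- Gz. apply Rlt_gt. apply g_mono; lra.
  - intros z' [Hz' [_ [Gz' _]]].
    destruct (Rtotal_order z z') as [L|[E|L]]; [|exact E|].
    + assert (H := g_mono a z z' Ha ltac:(lra) L ltac:(lra)). lra.
    + assert (H := g_mono a z' z Ha ltac:(lra) L ltac:(lra)). lra.
Qed.
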